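(* Let $\mu>0$, $0<\tau^-<\tau^+$, let $k\ge0$ be an integer, and for $\gamma\in(0,\mu)$ let $\tau=\tau(\gamma)\in[\tau^-,\tau^+]$ and let $\omega_k=\omega_k(\gamma)$ satisfy $\omega_k\tau\in((2k+1)\pi,(2k+2)\pi)$. Let $$r_k(\gamma)=\frac{\omega_k^2+\gamma^2}{2\gamma(\gamma-\mu)}.$$ Then for $\gamma\in(0,\mu)$: (1) $|r_k(\gamma)|\ge 2(\omega_k/\mu)^2$; (2) $r_k(\gamma)\to-\infty$ as $\gamma\to0$ or $\gamma\to\mu$; (3) $|r_k(\gamma)|\le\dfrac{(2k+2)^2(\pi/\tau^-)^2+\gamma^2}{2\gamma(\mu-\gamma)}$.
   Context: In the paper, $\tau$ is the state-dependent delay $a/v(\xi)$ at a steady state $\xi$ for a decreasing velocity function $v$ with limiting values $v^->v^+>0$, so that $\tau\in(\tau^-,\tau^+)$ with $\tau^\pm=a/v^\pm$. *)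

(* Defs.v *)
From Stdlib Require Import Reals.
From Coquelicot Require Import Coquelicot.
Open Scope R_scope.

Definition r_k (mu : R) (omega : R -> R) (g : R) : R :=
  (omega g ^ 2 + g ^ 2) / (2 * g * (g - mu)).

(* Main.v *)
Require Import Defs.
From Stdlib Require Import Reals.
From Coquelicot Require Import Coquelicot.
From Stdlib Require Import Lra.
Open Scope R_scope.

Lemma key_lb (c g mu w : R) : 0 < c -> c <= w ^ 2 -> 0 < g < mu ->
  c / (2 * g * mu) <= (w ^ 2 + g ^ 2) / (2 * g * (mu - g)) /\
  c / (2 * mu * (mu - g)) <= (w ^ 2 + g ^ 2) / (2 * g * (mu - g)).
Proof.
  intros Hc Hw Hg.
  assert (HB : 0 < 2 * g * (mu - g)) by nra.
  assert (Hcb : c / (2 * g * (mu - g)) <= (w ^ 2 + g ^ 2) / (2 * g * (mu - g))).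
  { unfold Rdiv; apply Rmult_le_compat_r. left; apply Rinv_0_lt_compat; lra. nra. }
  split; eapply Rle_trans; try exact Hcb; unfold Rdiv; apply Rmult_le_compat_l; try lra;
    apply Rinv_le_contravar; nra.
Qed.

Lemma r_neg (mu : R) omega g : 0 < g < mu ->
  r_k mu omega g = - ((omega g ^ 2 + g ^ 2) / (2 * g * (mu - g))).
Proof. intros H; unfold r_k; field; lra. Qed.

Lemma big_div (c x M : R) : 0 < c -> 0 < x -> x < c / (Rabs M + 1) -> - M < c / x.
Proof.
  intros Hc Hx H.
  assert (HM : 0 < Rabs M + 1) by (pose proof (Rabs_pos M); lra).
  apply Rlt_div_r in H; [|lra].
  apply Rlt_div_r; [lra|].
  pose proof (Rle_abs (-M)). rewrite Rabs_Ropp in H0. nra.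
Qed.

Theorem proposition5p5 (mu taum taup : R) (k : nat) (tau omega : R -> R)
  (hmu : 0 < mu) (htaum : 0 < taum) (htau : taum < taup)
  (htau_rng : forall g, 0 < g < mu -> taum <= tau g <= taup)
  (homega : forall g, 0 < g < mu ->
     (2 * INR k + 1) * PI < omega g * tau g < (2 * INR k + 2) * PI) :
  (forall g, 0 < g < mu -> Rabs (r_k mu omega g) >= 2 * (omega g / mu) ^ 2) /\
  filterlim (r_k mu omega) (at_right 0) (Rbar_locally m_infty) /\
  filterlim (r_k mu omega) (at_left mu) (Rbar_locally m_infty) /\
  (forall g, 0 < g < mu ->
     Rabs (r_k mu omega g) <=
       ((2 * INR k + 2) ^ 2 * (PI / taum) ^ 2 + g ^ 2) / (2 * g * (mu - g))).
Proof.
  pose proof PI_RGT_0 as HPI.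
  pose proof (pos_INR k) as Hk.
  assert (Hw : forall g, 0 < g < mu -> PI / taup < omega g /\
             omega g < (2 * INR k + 2) * PI / taum).
  { intros g Hg. specialize (htau_rng g Hg). specialize (homega g Hg).
    assert (Hwp : 0 < omega g) by nra.
    split.
    - apply (proj2 (Rlt_div_l PI (omega g) taup ltac:(lra))).
      assert (omega g * tau g <= omega g * taup) by (apply Rmult_le_compat_l; lra). nra.
    - apply (proj1 (Rlt_div_r (omega g) ((2 * INR k + 2) * PI) taum ltac:(lra))).
      assert (omega g * taum <= omega g * tau g) by (apply Rmult_le_compat_l; lra). lra. }
  set (c := (PI / taup) ^ 2).
  assert (Hc : 0 < c) by (unfold c; apply pow_lt; apply Rdiv_lt_0_compat; lra).
  assert (Hcw : forall g, 0 < g < mu -> c <= omega g ^ 2).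
  { intros g Hg. destruct (Hw g Hg) as [H1 _]. unfold c.
    assert (0 < PI / taup) by (apply Rdiv_lt_0_compat; lra). simpl. nra. }
  assert (Habs : forall g, 0 < g < mu -> Rabs (r_k mu omega g) =
             (omega g ^ 2 + g ^ 2) / (2 * g * (mu - g))).
  { intros g Hg. rewrite r_neg by exact Hg. rewrite Rabs_Ropp. apply Rabs_right.
    apply Rle_ge. apply Rdiv_le_0_compat. nra. nra. }
  split; [|split; [|split]].
  - intros g Hg. rewrite Habs by exact Hg. apply Rle_ge.
    assert (HB : 0 < 2 * g * (mu - g)) by nra.
    apply (proj1 (Rle_div_r _ _ _ HB)).
    assert (E: 2 * (omega g / mu) ^ 2 * (2 * g * (mu - g))
              = (omega g) ^ 2 * (4 * g * (mu - g) / mu ^ 2)) by (field; lra).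
    rewrite E.
    assert (4 * g * (mu - g) / mu ^ 2 <= 1).
    { apply (proj2 (Rle_div_l (4 * g * (mu - g)) 1 (mu ^ 2) ltac:(apply pow_lt; lra))). simpl. pose proof (pow2_ge_0 (mu - 2 * g)). nra. }
    assert (0 <= 4 * g * (mu - g) / mu ^ 2).
    { apply Rdiv_le_0_compat; nra. }
    nra.
  - intros P [M HM]. simpl.
    assert (He : 0 < Rmin mu (c / (2 * mu) / (Rabs M + 1))).
    { apply Rmin_pos. lra. apply Rdiv_lt_0_compat. apply Rdiv_lt_0_compat; lra.
      pose proof (Rabs_pos M); lra. }
    exists (mkposreal _ He). intros y Hy Hy0. apply HM.
    assert (Hy' : Rabs (y - 0) < Rmin mu (c / (2 * mu) / (Rabs M + 1))) by exact Hy.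
    rewrite Rminus_0_r, Rabs_right in Hy' by lra.
    assert (Hg : 0 < y < mu) by (pose proof (Rmin_l mu (c / (2 * mu) / (Rabs M + 1))); lra).
    rewrite r_neg by exact Hg.
    destruct (key_lb c y mu (omega y) Hc (Hcw y Hg) Hg) as [H1 _].
    assert (- M < c / (2 * y * mu)).
    { replace (c / (2 * y * mu)) with (c / (2 * mu) / y) by (field; lra).
      apply big_div. apply Rdiv_lt_0_compat; lra. lra.
      pose proof (Rmin_r mu (c / (2 * mu) / (Rabs M + 1))); lra. }
    lra.
  - intros P [M HM]. simpl.
    assert (He : 0 < Rmin mu (c / (2 * mu) / (Rabs M + 1))).
    { apply Rmin_pos. lra. apply Rdiv_lt_0_compat. apply Rdiv_lt_0_compat; lra.
      pose proof (Rabs_pos M); lra. }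
    exists (mkposreal _ He). intros y Hy Hy0. apply HM.
    assert (Hy' : Rabs (y - mu) < Rmin mu (c / (2 * mu) / (Rabs M + 1))) by exact Hy.
    rewrite Rabs_left in Hy' by lra.
    assert (Hg : 0 < y < mu) by (pose proof (Rmin_l mu (c / (2 * mu) / (Rabs M + 1))); lra).
    rewrite r_neg by exact Hg.
    destruct (key_lb c y mu (omega y) Hc (Hcw y Hg) Hg) as [_ H1].
    assert (- M < c / (2 * mu * (mu - y))).
    { replace (c / (2 * mu * (mu - y))) with (c / (2 * mu) / (mu - y)) by (field; lra).
      apply big_div. apply Rdiv_lt_0_compat; lra. lra.
      pose proof (Rmin_r mu (c / (2 * mu) / (Rabs M + 1))); lra. }
    lra.
  - intros g Hg. rewrite Habs by exact Hg.
    assert (HB : 0 < 2 * g * (mu - g)) by nra.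
    unfold Rdiv at 1 3. apply Rmult_le_compat_r. left; apply Rinv_0_lt_compat; lra.
    apply Rplus_le_compat_r.
    destruct (Hw g Hg) as [H1 H2].
    assert (0 < omega g) by (assert (0 < PI / taup) by (apply Rdiv_lt_0_compat; lra); lra).
    replace ((2 * INR k + 2) ^ 2 * (PI / taum) ^ 2) with (((2 * INR k + 2) * PI / taum) ^ 2)
      by (field; lra).
    simpl. nra.
Qed.
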